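(* For every $\omega\in\mathbb C\setminus i\mathbb R$ and every $y\in\big((2\operatorname{Re}\omega)^{-1}\mathbb Z\big)\setminus\big(\omega^{-1}\mathbb Z\cup\bar\omega^{-1}\mathbb Z\big)$, $$\sum_{k\in\mathbb Z}\frac{|\omega|^2y^2-k^2}{|\omega|^4y^4-2\operatorname{Re}(\omega^2)k^2y^2+k^4}=0.$$ In particular, for every $n\in\mathbb Z\setminus\{0\}$, $$\sum_{k\in\mathbb Z}\frac{n^2-k^2}{n^4+n^2k^2+k^4}=0\qquad\text{and}\qquad\sum_{k\in\mathbb Z}\frac{n^2-2k^2}{n^4+4k^4}=0.$$ *)

(* Defs.v *)
From Stdlib Require Import Reals ZArith.
From Coquelicot Require Import Coquelicot.
Open Scope R_scope.

Definition zsum_is (f : Z -> R) (l : R) : Prop :=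
  exists a b : R,
    is_series (fun n : nat => f (Z.of_nat n)) a /\
    is_series (fun n : nat => f (- Z.of_nat (S n))%Z) b /\
    a + b = l.

Definition in_invZ (c z : C) : Prop :=
  exists m : Z, z = Cdiv (RtoC (IZR m)) c.

(* Main.v *)
Require Import Defs.
From Stdlib Require Import Reals ZArith Lra Lia Psatz.
From Coquelicot Require Import Coquelicot.
Open Scope R_scope.

Lemma series_of_lim (a : nat -> R) (l : R) :
  is_lim_seq (sum_n a) l -> is_series a l.
Proof. intro H; exact H. Qed.

Definition decays (G : Z -> R) : Prop :=
  forall eps, 0 < eps -> exists M, forall k, M <= Rabs (IZR k) -> Rabs (G k) < eps.

Lemma decays_shift G z : decays G -> decays (fun k => G (k + z)%Z).
Proof.
  intros HG eps Heps. destruct (HG eps Heps) as [M HM].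
  exists (M + Rabs (IZR z)). intros k Hk. apply HM.
  rewrite plus_IZR.
  pose proof (Rabs_triang_inv (IZR k) (- IZR z)). rewrite Rabs_Ropp in H.
  replace (IZR k - - IZR z) with (IZR k + IZR z) in H by ring. lra.
Qed.

Lemma decays_opp G : decays G -> decays (fun k => - G k).
Proof.
  intros HG eps Heps. destruct (HG eps Heps) as [M HM].
  exists M. intros k Hk. rewrite Rabs_Ropp. auto.
Qed.

Lemma lim_pos G : decays G -> is_lim_seq (fun n => G (Z.of_nat n)) 0.
Proof.
  intro HG. apply is_lim_seq_spec. intros [eps Heps]. simpl.
  destruct (HG eps Heps) as [M HM].
  destruct (archimed M) as [H1 _].
  exists (Z.to_nat (up M)). intros n Hn.
  rewrite Rminus_0_r. apply HM. rewrite <- INR_IZR_INZ, Rabs_pos_eq by apply pos_INR.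
  apply le_INR in Hn. destruct (Z_lt_le_dec (up M) 0).
  - pose proof (IZR_lt _ _ l). pose proof (pos_INR n). simpl in *. lra.
  - rewrite INR_IZR_INZ, Z2Nat.id in Hn by lia. lra.
Qed.

Lemma lim_neg G : decays G -> is_lim_seq (fun n => G (- Z.of_nat (S n))%Z) 0.
Proof.
  intro HG. apply is_lim_seq_spec. intros [eps Heps]. cbn [pos].
  destruct (HG eps Heps) as [M HM].
  destruct (archimed M) as [H1 _].
  exists (Z.to_nat (up M)). intros n Hn.
  rewrite Rminus_0_r. apply HM. rewrite opp_IZR, Rabs_Ropp, <- INR_IZR_INZ,
    Rabs_pos_eq by apply pos_INR.
  assert (n <= S n)%nat by lia. apply le_INR in H. apply le_INR in Hn.
  destruct (Z_lt_le_dec (up M) 0).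
  - pose proof (IZR_lt _ _ l). pose proof (pos_INR n). simpl in *. lra.
  - rewrite INR_IZR_INZ, Z2Nat.id in Hn by lia. lra.
Qed.

Lemma zsum_ext f g l : (forall k, f k = g k) -> zsum_is f l -> zsum_is g l.
Proof.
  intros E [a [b [Ha [Hb Hab]]]]. exists a, b. split; [|split]; auto.
  - eapply is_series_ext; [|exact Ha]. intro; apply E.
  - eapply is_series_ext; [|exact Hb]. intro; apply E.
Qed.

Lemma zsum_plus f g l1 l2 : zsum_is f l1 -> zsum_is g l2 ->
  zsum_is (fun k => f k + g k) (l1 + l2).
Proof.
  intros [a [b [Ha [Hb Hab]]]] [c [d [Hc [Hd Hcd]]]].
  exists (a + c), (b + d). split; [|split].
  - exact (is_series_plus _ _ _ _ Ha Hc).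
  - exact (is_series_plus _ _ _ _ Hb Hd).
  - lra.
Qed.

Lemma zsum_opp f l : zsum_is f l -> zsum_is (fun k => - f k) (- l).
Proof.
  intros [a [b [Ha [Hb Hab]]]]. exists (- a), (- b). split; [|split].
  - exact (is_series_opp _ _ Ha).
  - exact (is_series_opp _ _ Hb).
  - lra.
Qed.

Lemma tele1 G : decays G -> zsum_is (fun k => G k - G (k + 1)%Z) 0.
Proof.
  intro HG. exists (G 0%Z), (- G 0%Z). split; [|split]; [| |ring].
  - apply series_of_lim.
    apply is_lim_seq_ext with (fun n => G 0%Z - G (Z.of_nat (S n))).
    + intro n. induction n.
      * rewrite sum_O. reflexivity.
      * rewrite sum_Sn, <- IHn.
        replace (Z.of_nat (S n) + 1)%Z with (Z.of_nat (S (S n))) by lia.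
        unfold plus; simpl. ring.
    + assert (H : is_lim_seq (fun n => G 0%Z - G (Z.of_nat (S n))) (G 0%Z - 0)).
      { apply is_lim_seq_minus'. apply is_lim_seq_const.
        apply (is_lim_seq_incr_1 (fun n => G (Z.of_nat n))). now apply lim_pos. }
      rewrite Rminus_0_r in H. exact H.
  - apply series_of_lim.
    apply is_lim_seq_ext with (fun n => G (- Z.of_nat (S n))%Z - G 0%Z).
    + intro n. induction n.
      * rewrite sum_O. simpl. reflexivity.
      * rewrite sum_Sn, <- IHn.
        replace (- Z.of_nat (S (S n)) + 1)%Z with (- Z.of_nat (S n))%Z by lia.
        unfold plus; simpl. ring.
    + assert (H : is_lim_seq (fun n => G (- Z.of_nat (S n))%Z - G 0%Z) (0 - G 0%Z)).
      { apply is_lim_seq_minus'. now apply lim_neg. apply is_lim_seq_const. }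
      rewrite Rminus_0_l in H. exact H.
Qed.

Lemma series_zero : is_series (fun _ : nat => 0) 0.
Proof.
  apply series_of_lim. apply is_lim_seq_ext with (fun _ => 0); [|apply is_lim_seq_const].
  intro n; induction n. now rewrite sum_O. rewrite sum_Sn, <- IHn. unfold plus; simpl; ring.
Qed.

Lemma zsum_zero : zsum_is (fun _ => 0) 0.
Proof. exists 0, 0. split; [|split]; [apply series_zero|apply series_zero|ring]. Qed.

Lemma tele_nat (p : nat) : forall G, decays G ->
  zsum_is (fun k => G k - G (k + Z.of_nat p)%Z) 0.
Proof.
  induction p; intros G HG.
  - eapply zsum_ext; [|apply zsum_zero]. intro k; simpl. rewrite Z.add_0_r. ring.
  - replace 0 with (0 + 0) by ring.
    eapply zsum_ext; [|apply zsum_plus; [apply (tele1 G HG) | apply (IHp (fun k => G (k+1)%Z))]].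
    + intro k. cbv beta. replace (k + Z.of_nat p + 1)%Z with (k + Z.of_nat (S p))%Z by lia. ring.
    + now apply decays_shift.
Qed.

Lemma tele (m : Z) G : decays G -> zsum_is (fun k => G k - G (k + m)%Z) 0.
Proof.
  intro HG. destruct (Z_le_gt_dec 0 m).
  - replace m with (Z.of_nat (Z.to_nat m)) by lia. now apply tele_nat.
  - replace 0 with (- 0) by ring.
    eapply zsum_ext; [|apply zsum_opp, (tele_nat (Z.to_nat (- m)) (fun k => G (k + m)%Z))].
    + intro k. cbv beta. replace (k + Z.of_nat (Z.to_nat (- m)) + m)%Z with k by lia. ring.
    + now apply decays_shift.
Qed.

Lemma decays_rat (al be c e : R) : 0 <= e ->
  decays (fun k => (al * IZR k + be) / ((IZR k - c)^2 + e)).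
Proof.
  intros He eps Heps.
  set (C := Rabs al + Rabs be).
  exists (1 + 2 * Rabs c + 4 * C / eps). intros k Hk.
  set (K := IZR k) in *.
  set (a := Rabs K) in *.
  assert (Ea : a = Rabs K) by reflexivity. clearbody a.
  assert (EC : C = Rabs al + Rabs be) by reflexivity. clearbody C.
  assert (HC : 0 <= C) by (rewrite EC; pose proof (Rabs_pos al); pose proof (Rabs_pos be); lra).
  assert (H4 : 0 <= 4 * C / eps) by (apply Rdiv_le_0_compat; lra).
  assert (Hc := Rabs_pos c).
  assert (Ha1 : 1 <= a) by lra.
  assert (Hkc : a / 2 <= Rabs (K - c)).
  { pose proof (Rabs_triang_inv K c). rewrite <- Ea in H. lra. }
  assert (HD : a * a / 4 <= (K - c)^2 + e).
  { rewrite <- (pow2_abs (K - c)). pose proof (Rabs_pos (K - c)). nra. }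
  assert (HDp : 0 < (K - c)^2 + e) by nra.
  assert (Hnum : Rabs (al * K + be) <= C * a).
  { pose proof (Rabs_triang (al * K) be). rewrite Rabs_mult, <- Ea in H.
    pose proof (Rabs_pos al). pose proof (Rabs_pos be). rewrite EC. nra. }
  rewrite Rabs_div by lra. rewrite (Rabs_pos_eq ((K - c)^2 + e)) by lra.
  apply Rlt_div_l; [lra|].
  assert (HM : eps * (4 * C / eps) = 4 * C) by (field; lra).
  assert (eps * a * a / 4 >= eps * a * (1 + 2 * Rabs c + 4 * C / eps) / 4).
  { assert (0 <= (eps * a) * (a - (1 + 2 * Rabs c + 4 * C / eps))) by (apply Rmult_le_pos; nra). nra. }
  assert (eps * (a * a / 4) <= eps * ((K - c)^2 + e)) by (apply Rmult_le_compat_l; lra).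
  assert (E2 : eps * a * (1 + 2 * Rabs c + 4 * C / eps) / 4 = a * (eps + 2 * eps * Rabs c) / 4 + a * C).
  { field. lra. }
  assert (0 < a * eps) by nra.
  assert (0 <= a * eps * Rabs c) by (apply Rmult_le_pos; nra).
  nra.
Qed.


Lemma Cmod_sq (u v : R) : Cmod (u, v) ^ 2 = u ^ 2 + v ^ 2.
Proof. unfold Cmod. rewrite pow2_sqrt; simpl; nra. Qed.

Lemma sq_sum0 a b : a ^ 2 + b ^ 2 = 0 -> a = 0 /\ b = 0.
Proof.
  intro H. assert (a ^ 2 = 0) by nra. assert (b ^ 2 = 0) by nra.
  split; apply Rsqr_0_uniq; rewrite Rsqr_pow2; auto.
Qed.

Lemma part1 : forall (w : C) (y : R),
      Re w <> 0 ->
      in_invZ (RtoC (2 * Re w)) (RtoC y) ->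
      ~ in_invZ w (RtoC y) ->
      ~ in_invZ (Cconj w) (RtoC y) ->
      zsum_is
        (fun k : Z =>
           ((Cmod w) ^ 2 * y ^ 2 - (IZR k) ^ 2) /
           ((Cmod w) ^ 4 * y ^ 4 - 2 * Re (Cmult w w) * (IZR k) ^ 2 * y ^ 2
            + (IZR k) ^ 4))
        0.
Proof.
  intros [u v] y Hu [m Hm] Hw _. simpl in Hu.
  apply (f_equal fst) in Hm. simpl in Hm.
  assert (Hy : y * (2 * u) = IZR m) by (rewrite Hm; field; lra).
  clear Hm.
  assert (Hy0 : y <> 0).
  { intro E. apply Hw. exists 0%Z. rewrite E. unfold Cdiv, Cmult, RtoC. simpl. f_equal; ring. }
  set (M := IZR m) in *. assert (EM : M = IZR m) by reflexivity. clearbody M.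
  assert (HM : M <> 0) by (intro E; rewrite E in Hy; apply Hy0; nra).
  set (t := v * y). assert (Et : t = v * y) by reflexivity. clearbody t.
  assert (Hq : forall K : Z, (IZR K - M/2)^2 + t^2 <> 0).
  { intros K E. destruct (sq_sum0 _ _ E) as [HK Ht]. assert (HK' : IZR K = M / 2) by lra. clear HK. rename HK' into HK.
    assert (Hv : v = 0) by (rewrite Et in Ht; destruct (Rmult_integral _ _ Ht); [auto|contradiction]).
    apply Hw. exists K. rewrite Hv, HK. unfold Cdiv, Cmult, Cinv, RtoC. simpl.
    replace y with (M / (2 * u)) by (field_simplify_eq; lra).
    f_equal; field; lra. }
  assert (Hq' : forall K : Z, (IZR K + M/2)^2 + t^2 <> 0).
  { intros K E. destruct (sq_sum0 _ _ E) as [HK Ht]. assert (HK' : IZR (- K) = M / 2) by (rewrite opp_IZR; lra). clear HK. rename HK' into HK.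
    assert (Hv : v = 0) by (rewrite Et in Ht; destruct (Rmult_integral _ _ Ht); [auto|contradiction]).
    apply Hw. exists (- K)%Z. rewrite Hv, HK. unfold Cdiv, Cmult, Cinv, RtoC. simpl.
    replace y with (M / (2 * u)) by (field_simplify_eq; lra).
    f_equal; field; lra. }
  set (G := fun k : Z => (- / M * IZR k + 1 / 2) / ((IZR k - M / 2) ^ 2 + t ^ 2)).
  eapply zsum_ext; [|apply (tele m G), decays_rat; nra].
  intro k. unfold G. cbv beta. rewrite plus_IZR, <- EM.
  replace (Cmod (u, v) ^ 4) with ((Cmod (u, v) ^ 2) ^ 2) by ring.
  rewrite Cmod_sq. simpl Re.
  assert (Eu : u = M / (2 * y)) by (field_simplify_eq; lra).
  pose proof (Hq k) as H1. pose proof (Hq' k) as H2.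
  set (K := IZR k) in *.
  replace (K + M - M / 2) with (K + M / 2) by lra.
  assert (ED : ((u ^ 2 + v ^ 2) ^ 2 * y ^ 4 - 2 * (u * u - v * v) * K ^ 2 * y ^ 2 + K ^ 4)
     = ((K - M / 2) ^ 2 + t ^ 2) * ((K + M / 2) ^ 2 + t ^ 2)).
  { rewrite Et, Eu. field. auto. }
  assert (EN : (u ^ 2 + v ^ 2) * y ^ 2 - K ^ 2 = M ^ 2 / 4 + t ^ 2 - K ^ 2).
  { rewrite Et, Eu. field. auto. }
  rewrite ED, EN. field. repeat split; auto.
  - intro E; apply H2. replace ((K + M / 2) ^ 2 + t ^ 2) with (((K * 2 + M) ^ 2 + t ^ 2 * 4) / 4) by field. rewrite E. field.
  - intro E; apply H1. replace ((K - M / 2) ^ 2 + t ^ 2) with (((K * 2 - M) ^ 2 + t ^ 2 * 4) / 4) by field. rewrite E. field.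
Qed.

Lemma part2 : forall n : Z, n <> 0%Z ->
      zsum_is
        (fun k : Z =>
           ((IZR n) ^ 2 - (IZR k) ^ 2) /
           ((IZR n) ^ 4 + (IZR n) ^ 2 * (IZR k) ^ 2 + (IZR k) ^ 4))
        0
      /\
      zsum_is
        (fun k : Z =>
           ((IZR n) ^ 2 - 2 * (IZR k) ^ 2) / ((IZR n) ^ 4 + 4 * (IZR k) ^ 4))
        0.
Proof.
  intros n Hn. assert (HN : IZR n <> 0) by (apply not_0_IZR; auto).
  set (N := IZR n) in *.
  split.
  - set (G := fun k : Z => (- / N * IZR k + 1 / 2) / ((IZR k - N / 2) ^ 2 + 3 * N ^ 2 / 4)).
    eapply zsum_ext; [|apply (tele n G), decays_rat; nra].
    intro k. unfold G. cbv beta. rewrite plus_IZR. fold N.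
    set (K := IZR k). clearbody K G N.
    assert (HN2 : 0 < N ^ 2) by (destruct (Rlt_or_le N 0); [nra|destruct H; [nra|exfalso; apply HN; auto]]).
    replace (K + N - N / 2) with (K + N / 2) by lra.
    assert (H1 : (K - N / 2) ^ 2 + 3 * N ^ 2 / 4 > 0) by nra.
    assert (H2 : (K + N / 2) ^ 2 + 3 * N ^ 2 / 4 > 0) by nra.
    assert (ED : N ^ 4 + N ^ 2 * K ^ 2 + K ^ 4 =
      ((K - N / 2) ^ 2 + 3 * N ^ 2 / 4) * ((K + N / 2) ^ 2 + 3 * N ^ 2 / 4)) by field.
    rewrite ED. field. repeat split; lra.
  - set (G := fun k : Z => (- / (2 * N) * IZR k + 1 / 4) / ((IZR k - N / 2) ^ 2 + N ^ 2 / 4)).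
    eapply zsum_ext; [|apply (tele n G), decays_rat; nra].
    intro k. unfold G. cbv beta. rewrite plus_IZR. fold N.
    set (K := IZR k). clearbody K G N.
    assert (HN2 : 0 < N ^ 2) by (destruct (Rlt_or_le N 0); [nra|destruct H; [nra|exfalso; apply HN; auto]]).
    replace (K + N - N / 2) with (K + N / 2) by lra.
    assert (H1 : (K - N / 2) ^ 2 + N ^ 2 / 4 > 0) by nra.
    assert (H2 : (K + N / 2) ^ 2 + N ^ 2 / 4 > 0) by nra.
    assert (ED : N ^ 4 + 4 * K ^ 4 =
      4 * (((K - N / 2) ^ 2 + N ^ 2 / 4) * ((K + N / 2) ^ 2 + N ^ 2 / 4))) by field.
    rewrite ED. field. repeat split; lra.
Qed.

Theorem mainTheorem5 :
  (forall (w : C) (y : R),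
      Re w <> 0 ->
      in_invZ (RtoC (2 * Re w)) (RtoC y) ->
      ~ in_invZ w (RtoC y) ->
      ~ in_invZ (Cconj w) (RtoC y) ->
      zsum_is
        (fun k : Z =>
           ((Cmod w) ^ 2 * y ^ 2 - (IZR k) ^ 2) /
           ((Cmod w) ^ 4 * y ^ 4 - 2 * Re (Cmult w w) * (IZR k) ^ 2 * y ^ 2
            + (IZR k) ^ 4))
        0)
  /\
  (forall n : Z, n <> 0%Z ->
      zsum_is
        (fun k : Z =>
           ((IZR n) ^ 2 - (IZR k) ^ 2) /
           ((IZR n) ^ 4 + (IZR n) ^ 2 * (IZR k) ^ 2 + (IZR k) ^ 4))
        0
      /\
      zsum_is
        (fun k : Z =>
           ((IZR n) ^ 2 - 2 * (IZR k) ^ 2) / ((IZR n) ^ 4 + 4 * (IZR k) ^ 4))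
        0).
Proof. split. exact part1. exact part2. Qed.
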